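(* Let $\mathcal{G}$ be a Grothendieck category, $X\in\mathcal{G}$, $\sigma$ an ordinal, $(X_\alpha\mid\alpha\le\sigma)$ a chain of subobjects of $X$ with $X_0=0$, $X_\sigma=X$, $X_\mu=\bigcup_{\alpha<\mu}X_\alpha$ for limit $\mu\le\sigma$, and let $(A_\alpha\mid\alpha<\sigma)$ be subobjects of $X$ with $X_{\alpha+1}=X_\alpha+A_\alpha$ for all $\alpha<\sigma$. If $S\subseteq\sigma$ is closed, then $\ell(S)\cap X_\alpha=\ell(S\cap\alpha)$ for every $\alpha<\sigma$.
   Context: For $S\subseteq\sigma$ (with $\sigma$ identified with the set of ordinals $<\sigma$), $\ell(S)=\sum_{\alpha\in S}A_\alpha\in\mathrm{Subobj}(X)$. A subset $S\subseteq\sigma$ is called closed if every $\alpha\in S$ satisfies $X_\alpha\cap A_\alpha\subseteq\sum_{\gamma\in S,\,\gamma<\alpha}A_\gamma$. Sums, intersections and direct unions are taken in the lattice $\mathrm{Subobj}(X)$ of subobjects of $X$. *)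

(* Defs.v *)
(* Abstract setting: the subobject lattice Subobj(X) of an
   object X of a Grothendieck category is a complete, modular lattice
   satisfying the AB5 condition (meets distribute over directed sups);
   this is the structure we axiomatise.  Ordinals are modelled by an
   arbitrary well-ordered type. *)
From Stdlib Require Import Classical.

Record UCModLattice := {
  car :> Type;
  le : car -> car -> Prop;
  le_refl : forall a, le a a;
  le_trans : forall a b c, le a b -> le b c -> le a c;
  le_antisym : forall a b, le a b -> le b a -> a = b;
  meet : car -> car -> car;
  meet_lb_l : forall a b, le (meet a b) a;
  meet_lb_r : forall a b, le (meet a b) b;
  meet_glb : forall a b c, le c a -> le c b -> le c (meet a b);
  sup : (car -> Prop) -> car;
  sup_ub : forall (D : car -> Prop) a, D a -> le a (sup D);
  sup_lub : forall (D : car -> Prop) c, (forall a, D a -> le a c) -> le (sup D) c;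
  modular : forall a b c, le a c ->
    sup (fun x => x = a \/ x = meet b c) = meet (sup (fun x => x = a \/ x = b)) c;
  upper_cont : forall (a : car) (D : car -> Prop),
    (exists d, D d) ->
    (forall d1 d2, D d1 -> D d2 -> exists d3, D d3 /\ le d1 d3 /\ le d2 d3) ->
    meet a (sup D) = sup (fun y => exists d, D d /\ y = meet a d)
}.

Arguments le {_} _ _.
Arguments meet {_} _ _.
Arguments sup {_} _.

Definition bot (L : UCModLattice) : L := sup (fun _ : L => False).
Definition top (L : UCModLattice) : L := sup (fun _ : L => True).
Definition join {L : UCModLattice} (a b : L) : L := sup (fun x => x = a \/ x = b).

Record WellOrder := {
  wcar :> Type;
  wlt : wcar -> wcar -> Prop;
  wlt_irrefl : forall a, ~ wlt a a;
  wlt_trans : forall a b c, wlt a b -> wlt b c -> wlt a c;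
  wlt_total : forall a b, wlt a b \/ a = b \/ wlt b a;
  wlt_wf : well_founded wlt
}.

Arguments wlt {_} _ _.

Definition wle {I : WellOrder} (a b : I) : Prop := wlt a b \/ a = b.

Definition is_zero {I : WellOrder} (a : I) : Prop := forall b, ~ wlt b a.

Definition is_succ {I : WellOrder} (a s : I) : Prop :=
  wlt a s /\ forall c, wlt a c -> wle s c.

Definition is_limit {I : WellOrder} (m : I) : Prop :=
  (exists b, wlt b m) /\ forall b, wlt b m -> exists c, wlt b c /\ wlt c m.

Definition ell {L : UCModLattice} {I : WellOrder} (A : I -> L) (S : I -> Prop) : L :=
  sup (fun y => exists a, S a /\ y = A a).

Definition closed_set {L : UCModLattice} {I : WellOrder}
    (X A : I -> L) (S : I -> Prop) : Prop :=
  forall a, S a -> le (meet (X a) (A a)) (ell A (fun g => S g /\ wlt g a)).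

(* Main.v *)
Require Import Defs.
From Stdlib Require Import Classical.

Lemma meet_mono (L : UCModLattice) (a a' b b' : L) :
  le a a' -> le b b' -> le (meet a b) (meet a' b').
Proof.
  intros. apply meet_glb.
  - eapply le_trans; [apply meet_lb_l|assumption].
  - eapply le_trans; [apply meet_lb_r|assumption].
Qed.

Lemma meet_comm_le (L : UCModLattice) (a b : L) : le (meet a b) (meet b a).
Proof. apply meet_glb; [apply meet_lb_r|apply meet_lb_l]. Qed.

Lemma join_l (L : UCModLattice) (a b : L) : le a (join a b).
Proof. apply sup_ub. auto. Qed.
Lemma join_r (L : UCModLattice) (a b : L) : le b (join a b).
Proof. apply sup_ub. auto. Qed.
Lemma join_lub (L : UCModLattice) (a b c : L) : le a c -> le b c -> le (join a b) c.
Proof. intros. apply sup_lub. intros x [-> | ->]; auto. Qed.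

Lemma ell_le (L : UCModLattice) (I : WellOrder) (A : I -> L) (S : I -> Prop) c :
  (forall g, S g -> le (A g) c) -> le (ell A S) c.
Proof. intros H. apply sup_lub. intros x [g [Hg ->]]. auto. Qed.

Lemma A_le_ell (L : UCModLattice) (I : WellOrder) (A : I -> L) (S : I -> Prop) g :
  S g -> le (A g) (ell A S).
Proof. intros. apply sup_ub. eauto. Qed.

Lemma ell_mono (L : UCModLattice) (I : WellOrder) (A : I -> L) (S1 S2 : I -> Prop) :
  (forall g, S1 g -> S2 g) -> le (ell A S1) (ell A S2).
Proof. intros H. apply ell_le. intros. apply A_le_ell. auto. Qed.

Lemma least_above (I : WellOrder) (g a : I) : wlt g a ->
  exists s, wlt g s /\ forall c, wlt g c -> wle s c.
Proof.
  intros H. apply NNPP. intros Hn.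
  assert (forall x, ~ wlt g x).
  { intro x. induction x as [x IH] using (well_founded_ind (wlt_wf I)).
    intros Hx. apply Hn. exists x. split; auto. intros c Hc.
    destruct (wlt_total I x c) as [h|[h|h]].
    - left; auto.
    - right; auto.
    - exfalso. exact (IH c h Hc). }
  exact (H0 a H).
Qed.

Ltac wt := match goal with
  | H1 : wlt ?x ?y, H2 : wlt ?y ?z |- wlt ?x ?z => exact (wlt_trans _ _ _ _ H1 H2)
  | H1 : wlt ?x ?y, H2 : wlt ?y ?z |- False => exact (wlt_irrefl _ _ (wlt_trans _ _ _ _ H1 H2))
  end.

Theorem lemma2p3 (L : UCModLattice) (I : WellOrder) (sigma : I)
  (X A : I -> L)
  (Hchain : forall a b, wle a b -> wle b sigma -> le (X a) (X b))
  (H0 : forall z, is_zero z -> X z = bot L)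
  (Hsigma : X sigma = top L)
  (Hlim : forall m, is_limit m -> wle m sigma ->
            X m = sup (fun y => exists a, wlt a m /\ y = X a))
  (Hsucc : forall a s, wlt a sigma -> is_succ a s -> X s = join (X a) (A a))
  (S : I -> Prop) (HS : forall a, S a -> wlt a sigma)
  (Hclosed : closed_set X A S) :
  forall a, wlt a sigma -> meet (ell A S) (X a) = ell A (fun g => S g /\ wlt g a).
Proof.
  set (ES := fun b => ell A (fun g => S g /\ wlt g b)).
  assert (trivdir : forall d, wle d sigma -> le (ES d) (X d)).
  { intros d Hd. apply ell_le. intros g [_ Hg].
    destruct (least_above I g d Hg) as [s [Hgs Hs]].
    assert (Hgsig : wlt g sigma).
    { destruct Hd as [Hd|Hd]; [wt|subst; auto]. }
    pose proof (Hsucc g s Hgsig (conj Hgs Hs)) as E.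
    eapply le_trans; [apply join_r|]. rewrite <- E.
    apply Hchain; auto. }
  assert (ESmono : forall b c, wle b c -> le (ES b) (ES c)).
  { intros b c Hbc. apply ell_mono. intros g [Sg Hg]. split; auto.
    destruct Hbc as [h| <-]; [wt|auto]. }
  intros a Ha.
  assert (Hind : forall b, wle b sigma -> wle a b -> le (meet (ES b) (X a)) (ES a)).
  { intro b. induction b as [b IH] using (well_founded_ind (wlt_wf I)).
    intros Hb Hab.
    destruct Hab as [Hab| <-]; [|apply meet_lb_l].
    assert (Hbsig : forall x, wlt x b -> wle x sigma).
    { intros x Hx. left. destruct Hb as [Hb| ->]; [wt|auto]. }
    destruct (classic (exists g, wlt g b /\ forall c, wlt g c -> wle b c)) as
      [[g [Hgb Hgmin]] | Hnot].
    -
      assert (Hag : wle a g).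
      { destruct (wlt_total I a g) as [h|[h|h]]; [left; auto|right; auto|].
        destruct (Hgmin a h) as [h'|h']; exfalso.
        + eapply (wlt_irrefl I a). wt.
        + subst. eapply (wlt_irrefl I a). auto. }
      assert (Hgsig : wlt g sigma).
      { destruct Hb as [Hb| ->]; [wt|auto]. }
      set (B := ES g).
      assert (HBX : le B (X g)) by (apply trivdir; left; auto).
      assert (HXa : le (X a) (X g)) by (apply Hchain; auto; left; auto).
      assert (IHg : le (meet B (X a)) (ES a)) by (apply IH; auto).
      destruct (classic (S g)) as [Sg|nSg].
      + assert (H1 : le (ES b) (join B (A g))).
        { apply ell_le. intros d [Sd Hd].
          destruct (wlt_total I d g) as [h|[h|h]].
          - eapply le_trans; [|apply join_l]. apply A_le_ell. split; auto.
          - subst. apply join_r.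
          - exfalso. destruct (Hgmin d h) as [h'|h'].
            + eapply (wlt_irrefl I d). wt.
            + subst. eapply (wlt_irrefl I d); auto. }
        pose proof (modular L B (A g) (X g) HBX) as Emod.
        assert (H2 : le (join B (meet (A g) (X g))) B).
        { apply join_lub; [apply le_refl|].
          eapply le_trans; [apply meet_comm_le|]. apply Hclosed. auto. }
        eapply le_trans; [|apply IHg].
        apply meet_glb; [|apply meet_lb_r].
        eapply le_trans; [|apply H2]. unfold join at 1. rewrite Emod.
        apply meet_glb.
        * eapply le_trans; [apply meet_lb_l|exact H1].
        * eapply le_trans; [apply meet_lb_r|exact HXa].
      + assert (H1 : le (ES b) B).
        { apply ell_le. intros d [Sd Hd].
          destruct (wlt_total I d g) as [h|[h|h]].
          - apply A_le_ell. split; auto.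
          - subst. contradiction.
          - exfalso. destruct (Hgmin d h) as [h'|h'].
            + eapply (wlt_irrefl I d). wt.
            + subst. eapply (wlt_irrefl I d); auto. }
        eapply le_trans; [|apply IHg]. apply meet_mono; auto. apply le_refl.
    - set (D := fun y => exists g, wlt g b /\ y = ES g).
      assert (H1 : le (ES b) (sup D)).
      { apply ell_le. intros d [Sd Hd].
        assert (exists c, wlt d c /\ wlt c b) as [c [Hdc Hcb]].
        { apply NNPP. intro Hn. apply Hnot. exists d. split; auto.
          intros c Hc. destruct (wlt_total I c b) as [h|[h|h]].
          - exfalso. apply Hn. eauto.
          - right; auto.
          - left; auto. }
        eapply le_trans; [|apply (sup_ub L D (ES c))].
        - apply A_le_ell. split; auto.
        - exists c; auto. }
      eapply le_trans.
      { apply meet_glb; [eapply le_trans; [apply meet_lb_r|apply le_refl]|].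
        eapply le_trans; [apply meet_lb_l|exact H1]. }
      rewrite upper_cont.
      + apply sup_lub. intros y [d [[g [Hg ->]] ->]].
        destruct (wlt_total I g a) as [h|[h|h]].
        * eapply le_trans; [apply meet_lb_r|]. apply ESmono. left; auto.
        * subst. apply meet_lb_r.
        * eapply le_trans; [apply meet_comm_le|]. apply IH; auto. left; auto.
      + exists (ES a). exists a. auto.
      + intros d1 d2 [g1 [Hg1 ->]] [g2 [Hg2 ->]].
        destruct (wlt_total I g1 g2) as [h|[h|h]].
        * exists (ES g2). split; [exists g2; auto|]. split; [apply ESmono; left; auto|apply le_refl].
        * subst. exists (ES g2). split; [exists g2; auto|]. split; apply le_refl.
        * exists (ES g1). split; [exists g1; auto|]. split; [apply le_refl|apply ESmono; left; auto].
  }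
  assert (Esig : ell A S = ES sigma).
  { apply le_antisym.
    - apply ell_le. intros g Sg. apply A_le_ell. split; auto.
    - apply ell_mono. intros g [Sg _]. auto. }
  apply le_antisym.
  - rewrite Esig. apply Hind; [right; auto|left; auto].
  - apply meet_glb.
    + apply ell_mono. intros g [Sg _]. auto.
    + apply trivdir. left; auto.
Qed.
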